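(* Consider a finite reward-free MDP with occupancy polytope $\Phi$. Let $\mathcal D=\{(d_e^k,\epsilon^k)\}_{k=1}^K$ with $d_e^k\in\Phi$, $\epsilon^k\ge0$, let $d_e'\in\Phi$, $\epsilon'\ge0$, and $\mathcal D^+:=\mathcal D\cup\{(d_e',\epsilon')\}$. Let $\mathcal R^\star\subseteq\Delta(S\times A)$ be the ground-truth reward set and suppose the consistency assumption holds for $\mathcal D$ and $\mathcal D^+$, i.e. $\mathcal R^\star\subseteq\mathcal R(\mathcal D)$ and $\mathcal R^\star\subseteq\mathcal R(\mathcal D^+)$. Then \[\mathcal R^\star\subseteq\mathcal R(\mathcal D^+)\subsetneq\mathcal R(\mathcal D)\quad\text{if and only if}\quad \epsilon'<\max_{r\in\mathcal R(\mathcal D)}\mathrm{subopt}(r,d_e').\]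
   Context: The MDP has finite $S$, $A$, transitions $P$, initial distribution $\mu_0$, discount $\gamma\in(0,1)$; $(Md)(s)=\sum_a d(s,a)-\gamma\sum_{s',a'}P(s\mid s',a')d(s',a')$ and $\Phi=\{d\ge0:Md=(1-\gamma)\mu_0\}$. Rewards are $r\in\Delta(S\times A)$. $\mathrm{subopt}(r,d):=\max_{\tilde d\in\Phi}r^\top\tilde d-r^\top d$. For a dataset $\mathcal D=\{(d_e^k,\epsilon^k)\}_k$, $\mathcal R(\mathcal D):=\{r\in\Delta(S\times A):\mathrm{subopt}(r,d_e^k)\le\epsilon^k\ \forall k\}$. *)

(* Defs.v *)
From HB Require Import structures.
From mathcomp Require Import all_boot all_order all_algebra.
From mathcomp Require Import all_classical all_reals.
Set Implicit Arguments. Unset Strict Implicit. Unset Printing Implicit Defensive.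
Import Order.TTheory GRing.Theory Num.Theory.
Local Open Scope classical_set_scope.
Local Open Scope ring_scope.

Section MDP.
Variables (R : realType) (S A : finType).

(* Transition kernel: P s s' a = P(s | s', a).  Occupancy measures and
   rewards are finite functions on S * A. *)
Definition Mop (P : S -> S -> A -> R) (gamma : R) (d : {ffun S * A -> R}) (s : S) : R :=
  \sum_(a : A) d (s, a) - gamma * \sum_(p : S * A) P s p.1 p.2 * d p.

Definition Phi (P : S -> S -> A -> R) (mu0 : S -> R) (gamma : R) : set {ffun S * A -> R} :=
  [set d : {ffun S * A -> R} | (forall p, 0 <= d p) /\ forall s, Mop P gamma d s = (1 - gamma) * mu0 s].

Definition simplex : set {ffun S * A -> R} :=
  [set r : {ffun S * A -> R} | (forall p, 0 <= r p) /\ \sum_(p : S * A) r p = 1].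

Definition value (r d : {ffun S * A -> R}) : R := \sum_(p : S * A) r p * d p.

Definition subopt P mu0 gamma (r d : {ffun S * A -> R}) : R :=
  sup [set value r dt | dt in Phi P mu0 gamma] - value r d.

Definition feasible P mu0 gamma (D : seq ({ffun S * A -> R} * R)) : set {ffun S * A -> R} :=
  [set r : {ffun S * A -> R} | simplex r /\ forall x, x \in D -> subopt P mu0 gamma r x.1 <= x.2].

End MDP.

(* Main.v *)
Require Import Defs.
From HB Require Import structures.
From mathcomp Require Import all_boot all_order all_algebra.
From mathcomp Require Import all_classical all_reals.
Import Order.TTheory GRing.Theory Num.Theory.
Local Open Scope classical_set_scope.
Local Open Scope ring_scope.


Lemma phi_sum (R : realType) (S A : finType) (P : S -> S -> A -> R) (mu0 : S -> R) (gamma : R) d :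
  (forall s' a, \sum_(s : S) P s s' a = 1) -> \sum_(s : S) mu0 s = 1 -> gamma < 1 ->
  Phi P mu0 gamma d -> \sum_p d p = 1.
Proof.
move=> HP Hmu Hg [d0 Hd].
have E : \sum_s Mop P gamma d s = \sum_s (1 - gamma) * mu0 s by apply: eq_bigr => s _; rewrite Hd.
rewrite -mulr_sumr Hmu mulr1 /Mop sumrB -mulr_sumr in E.
have Hp : \sum_s \sum_a d (s, a) = \sum_p d p.
  by rewrite pair_bigA /=; apply: eq_bigr => -[].
rewrite Hp exchange_big /= in E.
have Hq : \sum_p \sum_i P i p.1 p.2 * d p = \sum_p d p.
  by apply: eq_bigr => p _; rewrite -mulr_suml HP mul1r.
rewrite Hq in E.
have : (1 - gamma) * \sum_p d p = (1 - gamma) * 1.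
  by rewrite mulrBl mul1r mulr1.

move/mulfI; apply; by rewrite subr_eq0 eq_sym; move: Hg; rewrite lt_neqAle => /andP[].
Qed.

Lemma subopt_le1 (R : realType) (S A : finType) (P : S -> S -> A -> R) (mu0 : S -> R) (gamma : R) r de :
  (forall s' a, \sum_(s : S) P s s' a = 1) -> \sum_(s : S) mu0 s = 1 -> gamma < 1 ->
  simplex r -> Phi P mu0 gamma de -> subopt P mu0 gamma r de <= 1.
Proof.
move=> HP Hmu Hg [r0 r1] Hde.
have v1 : forall dt, Phi P mu0 gamma dt -> value r dt <= 1.
  move=> dt Hdt; rewrite -r1 /value; apply: ler_sum => p _.
  rewrite -[X in _ <= X]mulr1; apply: ler_wpM2l => //.
  rewrite -(phi_sum _ _ _ _ _ _ _ HP Hmu Hg Hdt) (bigD1 p) //= lerDl sumr_ge0 //.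
  by move=> q _; case: Hdt => + _; apply.
have v0 : 0 <= value r de.
  by apply: sumr_ge0 => p _; apply: mulr_ge0 => //; case: Hde => + _; apply.
rewrite /subopt -[X in _ <= X]subr0 lerB //.
apply: ge_sup; first by exists (value r de), de.
by move=> _ [dt Hdt <-]; apply: v1.
Qed.
Theorem mainTheorem5 (R : realType) (S A : finType)
  (P : S -> S -> A -> R) (mu0 : S -> R) (gamma : R)
  (D : seq ({ffun S * A -> R} * R)) (de' : {ffun S * A -> R}) (eps' : R)
  (Rstar : set {ffun S * A -> R}) :
  (forall s s' a, 0 <= P s s' a) ->
  (forall s' a, \sum_(s : S) P s s' a = 1) ->
  (forall s, 0 <= mu0 s) -> \sum_(s : S) mu0 s = 1 ->
  0 < gamma < 1 ->
  (forall x, x \in D -> Phi P mu0 gamma x.1 /\ 0 <= x.2) ->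
  Phi P mu0 gamma de' -> 0 <= eps' ->
  Rstar `<=` @simplex R S A ->
  Rstar `<=` feasible P mu0 gamma D ->
  Rstar `<=` feasible P mu0 gamma ((de', eps') :: D) ->
  ((Rstar `<=` feasible P mu0 gamma ((de', eps') :: D)
    /\ feasible P mu0 gamma ((de', eps') :: D) `<` feasible P mu0 gamma D)
   <-> eps' < sup [set subopt P mu0 gamma r de' | r in feasible P mu0 gamma D]).
Proof.
move=> HP0 HP Hm0 Hmu /andP[g0 g1] HD Hde He RS RF RF'.
set F := feasible P mu0 gamma D.
set F' := feasible P mu0 gamma ((de', eps') :: D).
have sub : F' `<=` F.
  move=> r [sr Hr]; split => // x xD; apply: Hr; by rewrite in_cons xD orbT.
have notF' : forall r, F r -> ~ F' r -> eps' < subopt P mu0 gamma r de'.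
  move=> r [sr Hr] nF; rewrite ltNge; apply/negP => Hle; apply: nF; split => //.
  by move=> x; rewrite in_cons => /orP[/eqP -> //|xD]; apply: Hr.
split.
- move=> [_ [_ nsub]].
  have [r [Fr nF'r]] : exists r, F r /\ ~ F' r.
    apply: contra_notP nsub => H r Fr; apply: contra_notP (H) => nF; exists r; split => //.
  apply: (lt_le_trans (notF' r Fr nF'r)).
  apply: ub_le_sup; last by exists r.
  exists 1 => _ [q [sq _] <-].
  exact: (subopt_le1 _ _ _ _ _ _ _ _ HP Hmu g1 sq Hde).
- move=> Hlt.
  have ne : [set subopt P mu0 gamma r de' | r in F] !=set0.
    apply/set0P/negP => /eqP E; move: Hlt; rewrite E sup0 => /lt_le_trans /(_ He).
    by rewrite ltxx.
  have [_ [r Fr <-] Hy] := sup_gt ne Hlt.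
  split => //; split => // HF.
  have [_ Hr] := HF r Fr.
  have := Hr (de', eps'); rewrite mem_head => /(_ isT) /=.
  by rewrite leNgt Hy.
Qed.
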